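(* Let $d\geq 2$ and let $n_1\geq n_2\geq\cdots\geq n_d\geq 2$ be integers, and let $G=\textsc{Grid}(n_1,\ldots,n_d)$. Then $G$ admits a $Q_d$-magic vertex labeling $f$ and a $Q_d$-magic edge labeling $g$.
   Context: For integers $k\le \ell$, $[k]=\{1,\ldots,k\}$. The grid graph $\textsc{Grid}(n_1,\ldots,n_d)$ has vertex set $V=[n_1]\times\cdots\times[n_d]$ and edge set $E=\{\{\mathbf x,\mathbf y\}: \mathbf x,\mathbf y\in V,\ \sum_{i=1}^d|x_i-y_i|=1\}$ (the Cartesian product of $d$ paths with $n_1,\ldots,n_d$ vertices). The $d$-cube $Q_d$ is $\textsc{Grid}(2,\ldots,2)$ ($d$ entries). For graphs $G=(V,E)$ and $H$: a bijection $f:V\to\{1,\ldots,|V|\}$ is an $H$-magic vertex labeling if there is a constant $c$ with $\sum_{v\in V(H')}f(v)=c$ for every subgraph $H'\subseteq G$ isomorphic to $H$; a bijection $g:E\to\{1,\ldots,|E|\}$ is an $H$-magic edge labeling if there is a constant $c'$ with $\sum_{e\in E(H')}g(e)=c'$ for every subgraph $H'\subseteq G$ isomorphic to $H$. The constants $c$, $c'$ are called the $H$-magic sums. *)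

(* Defs.v *)
From mathcomp Require Import all_boot.
Set Implicit Arguments. Unset Strict Implicit. Unset Printing Implicit Defensive.

(* Vertices of Grid(n_1,...,n_d): coordinate i ranges over 'I_(n i) = {0..n i - 1}
   (0-based shift of [n_i]; adjacency only depends on coordinate differences). *)
Definition grid_V (d : nat) (n : 'I_d -> nat) : finType :=
  {dffun forall i : 'I_d, 'I_(n i)}.

Definition distn (a b : nat) : nat := (a - b) + (b - a).

Definition grid_adj d (n : 'I_d -> nat) (x y : grid_V n) : bool :=
  \sum_(i < d) distn (x i) (y i) == 1.

Definition grid_E d (n : 'I_d -> nat) : {set {set grid_V n}} :=
  [set [set p.1; p.2] | p in [set p : grid_V n * grid_V n | grid_adj p.1 p.2]].

Definition cube_dims (d : nat) : 'I_d -> nat := fun _ => 2.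
Arguments cube_dims d : clear implicits.
Definition Q_V (d : nat) : finType := grid_V (cube_dims d).
Definition Q_E (d : nat) : {set {set Q_V d}} := grid_E (cube_dims d).

Definition iso_subgraph (V W : finType) (E : {set {set V}}) (EH : {set {set W}})
  (Vs : {set V}) (Es : {set {set V}}) : Prop :=
  [/\ Es \subset E,
      (forall e, e \in Es -> e \subset Vs) &
      exists phi : W -> V,
        [/\ injective phi, phi @: [set: W] = Vs &
            forall a b : W, ([set phi a; phi b] \in Es) = ([set a; b] \in EH)]].

Definition magic_vertex_labeling (V W : finType) (E : {set {set V}}) (EH : {set {set W}})
  (f : V -> nat) : Prop :=
  [/\ injective f, (forall v, 1 <= f v <= #|[set: V]|) &
      exists c, forall Vs Es, iso_subgraph E EH Vs Es -> \sum_(v in Vs) f v = c].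

Definition magic_edge_labeling (V W : finType) (E : {set {set V}}) (EH : {set {set W}})
  (g : {set V} -> nat) : Prop :=
  [/\ {in E &, injective g}, (forall e, e \in E -> 1 <= g e <= #|E|) &
      exists c', forall Vs Es, iso_subgraph E EH Vs Es -> \sum_(e in Es) g e = c'].

(* Main.v *)
Require Import Defs.
From mathcomp Require Import all_boot zify.
Set Implicit Arguments. Unset Strict Implicit. Unset Printing Implicit Defensive.

Lemma distnC a b : distn a b = distn b a.
Proof. rewrite /distn; lia. Qed.

Lemma distnS a : distn a a.+1 = 1.
Proof. rewrite /distn; lia. Qed.

Lemma distnSC a : distn a.+1 a = 1.
Proof. rewrite /distn; lia. Qed.

Lemma distnn a : distn a a = 0.
Proof. rewrite /distn; lia. Qed.

Lemma distn0 a b : distn a b = 0 -> a = b.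
Proof. rewrite /distn; lia. Qed.

Lemma sum_eq1 (d : nat) (F : 'I_d -> nat) :
  \sum_(i < d) F i = 1 -> exists t, F t = 1 /\ forall s, s != t -> F s = 0.
Proof.
move=> H.
have [t Ht] : exists t, 0 < F t.
  case: (pickP (fun t => 0 < F t)) => [t Ht|H0]; first by exists t.
  move: H; rewrite big1 // => i _; have := H0 i; by case: (F i).
exists t; rewrite (bigD1 t) //= in H.
move: H; set S := \sum_(i < d | _) _ => H.
have Hr : S = 0 by lia.
split; first lia.
move=> s hs; move/eqP: Hr; rewrite /S sum_nat_eq0 => /forallP/(_ s).
by rewrite hs /= => /eqP.
Qed.

Section Grid.
Variables (d : nat) (n : 'I_d -> nat).
Local Notation V := (grid_V n).

Lemma ffun_nat_eq (x y : V) : (forall i, (x i : nat) = y i) -> x = y.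
Proof. by move=> H; apply/ffunP => i; apply/val_inj/H. Qed.

Lemma adjP (x y : V) : grid_adj x y ->
  exists t, distn (x t) (y t) = 1 /\ forall s, s != t -> (x s : nat) = y s.
Proof.
rewrite /grid_adj => /eqP /sum_eq1 [t [h1 h2]]; exists t; split => // s /h2.
exact: distn0.
Qed.

Lemma adjC (x y : V) : grid_adj x y = grid_adj y x.
Proof. by rewrite /grid_adj; under eq_bigr do rewrite distnC. Qed.

Lemma adj_neq (x y : V) : grid_adj x y -> x != y.
Proof.
move/adjP=> [t [h _]]; apply/negP => /eqP E; subst y.
by move: h; rewrite /distn; lia.
Qed.

Lemma inE_E e : e \in grid_E n -> exists x y, grid_adj x y /\ e = [set x; y].
Proof. by case/imsetP => p; rewrite inE => hp ->; exists p.1, p.2. Qed.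

Lemma set2_inE (x y : V) : grid_adj x y -> [set x; y] \in grid_E n.
Proof. by move=> h; apply/imsetP; exists (x, y); rewrite ?inE. Qed.

Lemma set2_eq (x y u w : V) : x != y -> [set x; y] = [set u; w] ->
  (u = x /\ w = y) \/ (u = y /\ w = x).
Proof.
move=> hxy E.
have hu : u \in [set x; y] by rewrite E !inE eqxx.
have hw : w \in [set x; y] by rewrite E !inE eqxx orbT.
have hx : x \in [set u; w] by rewrite -E !inE eqxx.
have hy : y \in [set u; w] by rewrite -E !inE eqxx orbT.
move: hu hw hx hy; rewrite !inE.
case/orP => /eqP hu; case/orP => /eqP hw; subst u w => hx hy.
- move: hy; rewrite orbb => /eqP hyx; by rewrite hyx eqxx in hxy.
- by left.
- by right.
- move: hx; rewrite orbb => /eqP hxy'; by rewrite hxy' eqxx in hxy.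
Qed.

Lemma E_adj (x y : V) : x != y -> [set x; y] \in grid_E n -> grid_adj x y.
Proof.
move=> hxy /inE_E [u [w [huw E]]].
case: (set2_eq hxy E) => [[hu hw]|[hu hw]]; subst u w => //; by rewrite adjC.
Qed.

End Grid.

Lemma flip_lt (m : nat) : 1 - m < 2.
Proof. by case: m. Qed.

Definition flip d (a : Q_V d) (k : 'I_d) : Q_V d :=
  [ffun i => if i == k then (Ordinal (flip_lt (a i)) : 'I_(cube_dims d i)) else a i].

Section Q.
Variable d : nat.
Local Notation Q := (Q_V d).

Lemma Q_lt2 (a : Q) i : (a i : nat) < 2.
Proof. exact: ltn_ord. Qed.

Lemma flipE (a : Q) k i : (flip a k i : nat) = if i == k then 1 - a i else a i.
Proof. by rewrite /flip ffunE; case: ifP. Qed.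

Lemma flip_adj (a : Q) k : grid_adj a (flip a k).
Proof.
rewrite /grid_adj (bigD1 k) //= big1 => [|i hi]; rewrite flipE ?eqxx.
  by move: (Q_lt2 a k); set m := nat_of_ord (a k); rewrite /distn; lia.
by rewrite (negbTE hi) /distn !subnn.
Qed.

Lemma adj_flip (a b : Q) : grid_adj a b -> exists k, b = flip a k.
Proof.
move/adjP=> [t [h1 h2]]; exists t; apply: ffun_nat_eq => i.
rewrite flipE; case: ifP => [/eqP ->|/negbT /h2 //].
by move: h1 (Q_lt2 a t) (Q_lt2 b t); rewrite /distn; lia.
Qed.

Lemma flip_neq (a : Q) k : flip a k != a.
Proof.
apply/negP => /eqP /(congr1 (fun f : Q => (f k : nat))); rewrite flipE eqxx.
by move: (Q_lt2 a k); set m := nat_of_ord (a k); lia.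
Qed.

Lemma flipK (a : Q) k : flip (flip a k) k = a.
Proof.
apply: ffun_nat_eq => i; rewrite !flipE; case: (eqVneq i k) => [->|//].
by move: (Q_lt2 a k); set m := nat_of_ord (a k); lia.
Qed.

Lemma flipC (a : Q) k j : flip (flip a k) j = flip (flip a j) k.
Proof. by apply: ffun_nat_eq => i; rewrite !flipE; do 2 case: ifP => //. Qed.

Lemma flip_neq2 (a : Q) k j : k != j -> flip a k != flip a j.
Proof.
move=> hkj; apply/negP => /eqP /(congr1 (fun f : Q => (f k : nat))).
rewrite !flipE eqxx (negbTE hkj); move: (Q_lt2 a k); set m := nat_of_ord (a k); lia.
Qed.

Lemma flip_neq3 (a : Q) k j : k != j -> flip (flip a k) j != a.
Proof.
move=> hkj; apply/negP => /eqP /(congr1 (fun f : Q => (f k : nat))).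
rewrite !flipE eqxx (negbTE hkj); move: (Q_lt2 a k); set m := nat_of_ord (a k); lia.
Qed.

End Q.

Section Grid2.
Variables (d : nat) (n : 'I_d -> nat).
Local Notation V := (grid_V n).

Definition succ (x : V) (t : 'I_d) : V :=
  [ffun i => if i == t then insubd (x i) (x i).+1 else x i].

Lemma succE (x : V) t i : (x t).+1 < n t ->
  (succ x t i : nat) = if i == t then (x i).+1 else x i.
Proof.
move=> h; rewrite /succ ffunE; case: ifP => // /eqP ->.
by rewrite val_insubd h.
Qed.

Definition dif (x y : V) t := (x t : nat) != y t.
Definition along t (e : {set V}) := [exists x in e, exists y in e, dif x y t].

Lemma along_set2 (x y : V) s t : grid_adj x y -> distn (x s) (y s) = 1 ->
  along t [set x; y] = (t == s).
Proof.
move=> /adjP [s0 [h1 h2]] hs.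
have es : s = s0.
  apply/eqP; apply/negP => /negP /h2 e; by move: hs; rewrite e /distn; lia.
subst s0; apply/idP/idP.
- case/existsP => u /andP [hu /existsP [w /andP [hw hd]]].
  apply/negP => /negP hts; move: hd; rewrite /dif.
  move: hu hw; rewrite !inE => /orP [] /eqP -> /orP [] /eqP ->;
    by rewrite ?h2 // eqxx.
- move=> /eqP ->; apply/existsP; exists x; rewrite !inE eqxx /=.
  apply/existsP; exists y; rewrite !inE eqxx orbT /= /dif.
  by apply/negP => /eqP e; move: hs; rewrite e /distn; lia.
Qed.

Lemma succ_adj (x : V) t : (x t).+1 < n t -> grid_adj x (succ x t).
Proof.
move=> h; rewrite /grid_adj (bigD1 t) //= big1 => [|i hi]; rewrite succE // ?eqxx.
  by rewrite distnS.
by rewrite (negbTE hi) distnn.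
Qed.

Lemma succ_along (x : V) t s : (x t).+1 < n t ->
  along s [set x; succ x t] = (s == t).
Proof.
move=> h; apply: along_set2; first exact: succ_adj.
by rewrite succE // eqxx /distn; lia.
Qed.

Lemma succ_neq (x : V) t : (x t).+1 < n t -> x != succ x t.
Proof. by move=> h; apply: adj_neq; apply: succ_adj. Qed.

Lemma E_struct e t : e \in grid_E n -> along t e ->
  exists x : V, (x t).+1 < n t /\ e = [set x; succ x t].
Proof.
move=> /inE_E [u [w [huw ->]]].
have := huw => /adjP [s [h1 h2]].
rewrite (along_set2 _ huw h1) => /eqP ets; subst s.
case: (ltnP (u t) (w t)) => hlt.
- exists u; have hu : (u t).+1 < n t.
    have := ltn_ord (w t); move: h1; rewrite /distn; lia.
  split => //; congr [set _; _]; apply: ffun_nat_eq => i.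
  rewrite succE //; case: ifP => [/eqP ->|/negbT /h2 //].
  by move: h1; rewrite /distn; lia.
- exists w; have hw : (w t).+1 < n t.
    have := ltn_ord (u t); move: h1; rewrite /distn; lia.
  split => //; rewrite setUC; congr [set _; _]; apply: ffun_nat_eq => i.
  rewrite succE //; case: ifP => [/eqP ->|/negbT /h2 -> //].
  by move: h1; rewrite /distn; lia.
Qed.

Lemma succ_inE (x : V) t : (x t).+1 < n t -> [set x; succ x t] \in grid_E n.
Proof. by move=> h; apply: set2_inE; apply: succ_adj. Qed.

Lemma sum_set2 (F : V -> nat) (x y : V) : x != y ->
  \sum_(v in [set x; y]) F v = F x + F y.
Proof.
by move=> hxy; rewrite big_setU1 ?big_set1 //= inE.
Qed.

Lemma succ_set_inj (x x' : V) t t' : (x t).+1 < n t -> (x' t').+1 < n t' ->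
  [set x; succ x t] = [set x'; succ x' t'] -> t = t' /\ x = x'.
Proof.
move=> h h' E.
case: (set2_eq (succ_neq h) E) => [[e1 e2]|[e1 e2]].
- subst x'; split => //; case: (eqVneq t t') => // hne.
  have := congr1 (fun f : V => (f t : nat)) e2; rewrite !succE // eqxx.
  rewrite (negbTE hne); lia.
- exfalso.
  have a1 : (x' t : nat) = (x t).+1 by rewrite e1 succE // eqxx.
  have a2 : (x t' : nat) = (x' t').+1 by rewrite -e2 succE // eqxx.
  case: (eqVneq t t') => [ett'|hne].
    subst t'; lia.
  have b1 : (x' t' : nat) = x t' by rewrite e1 succE // eq_sym (negbTE hne).
  lia.
Qed.

(* the geometric core: two neighbours of x along the same axis have x as their
   only common neighbour *)
Lemma grid_square (x y z w : V) t :
  grid_adj x y -> grid_adj x z -> y != z ->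
  (forall s, s != t -> (x s : nat) = y s) ->
  (forall s, s != t -> (x s : nat) = z s) ->
  grid_adj w y -> grid_adj w z -> w = x.
Proof.
move=> axy axz yz hy hz awy awz.
have dt : forall u : V, grid_adj x u -> (forall s, s != t -> (x s : nat) = u s) ->
    distn (x t) (u t) = 1.
  move=> u /adjP [t1 [e1 e2]] hu; case: (eqVneq t1 t) => [<- //|ne].
  by move: e1; rewrite hu // /distn; lia.
have dy := dt _ axy hy; have dz := dt _ axz hz.
have yzt : (y t : nat) != z t.
  apply/negP => /eqP e; move/negP: yz; apply; apply/eqP; apply: ffun_nat_eq => i.
  case: (eqVneq i t) => [-> //|ne]; by rewrite -hy // -hz.
move: awy awz => /adjP [s1 [f1 g1]] /adjP [s2 [f2 g2]].
have s1t : s1 = t.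
  case: (eqVneq s1 t) => // ne1.
  have wt1 : (w t : nat) = y t by apply: g1; rewrite eq_sym.
  case: (eqVneq s2 t) => [es2|ne2].
    subst s2; move: f2 dy dz yzt; rewrite wt1 /distn; lia.
  have wt2 : (w t : nat) = z t by apply: g2; rewrite eq_sym.
  by move: yzt; rewrite -wt1 -wt2 eqxx.
have s2t : s2 = t.
  case: (eqVneq s2 t) => // ne2.
  have wt2 : (w t : nat) = z t by apply: g2; rewrite eq_sym.
  subst s1; move: f1 dy dz yzt; rewrite wt2 /distn; lia.
subst s1 s2; apply: ffun_nat_eq => i.
case: (eqVneq i t) => [->|ne].
  by move: f1 f2 dy dz yzt; rewrite /distn; lia.
by rewrite g1 // hy.
Qed.
End Grid2.

Section Copy.
Variables (d : nat) (n : 'I_d -> nat).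
Local Notation V := (grid_V n).
Local Notation Q := (Q_V d).
Variables (Vs : {set V}) (Es : {set {set V}}) (phi : Q -> V).
Hypotheses (hEs : Es \subset grid_E n)
  (hsub : forall e, e \in Es -> e \subset Vs)
  (hinj : injective phi) (himg : phi @: [set: Q] = Vs)
  (hiff : forall a b : Q, ([set phi a; phi b] \in Es) = ([set a; b] \in Q_E d)).

Lemma phi_edge (a : Q) k : [set phi a; phi (flip a k)] \in Es.
Proof. by rewrite hiff; apply: set2_inE; apply: flip_adj. Qed.

Lemma phi_adj (a : Q) k : grid_adj (phi a) (phi (flip a k)).
Proof.
apply: E_adj; last by apply: (subsetP hEs); apply: phi_edge.
by rewrite (inj_eq hinj) eq_sym flip_neq.
Qed.

Lemma inVs v : v \in Vs -> exists a, v = phi a.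
Proof. by rewrite -himg => /imsetP [a _ ->]; exists a. Qed.

Lemma edge_struct e a : e \in Es -> phi a \in e ->
  exists k, e = [set phi a; phi (flip a k)].
Proof.
move=> he ha.
have [x [y [hxy ee]]] := inE_E (subsetP hEs _ he).
have hx : x \in Vs by apply: (subsetP (hsub he)); rewrite ee !inE eqxx.
have hy : y \in Vs by apply: (subsetP (hsub he)); rewrite ee !inE eqxx orbT.
have [b eb] := inVs hx; have [c ec] := inVs hy; subst x y.
have hbc : b != c by apply/negP => /eqP ebc; move: (adj_neq hxy); rewrite ebc eqxx.
have hq : [set b; c] \in Q_E d by rewrite -hiff -ee.
have [k ck] := adj_flip (E_adj hbc hq); subst c.
move: ha; rewrite ee !inE => /orP [] /eqP /hinj eab.
- by subst b; exists k.
- subst a; exists k; rewrite flipK setUC //.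
Qed.

Definition axf (a : Q) (k : 'I_d) : 'I_d :=
  odflt k [pick t | dif (phi a) (phi (flip a k)) t].

Lemma axf_dif a k : distn (phi a (axf a k)) (phi (flip a k) (axf a k)) = 1.
Proof.
have [t [h1 h2]] := adjP (phi_adj a k).
rewrite /axf; case: pickP => [s hs|H] /=.
  case: (eqVneq s t) => [-> //|ne].
  by move: hs; rewrite /dif h2 // eqxx.
by move: (H t); rewrite /dif => /negbT; rewrite negbK => /eqP e; move: h1; rewrite e distnn.
Qed.

Lemma along_phi a k t : along t [set phi a; phi (flip a k)] = (t == axf a k).
Proof. exact: (along_set2 _ (phi_adj a k) (axf_dif a k)). Qed.

Lemma axf_inj a : injective (axf a).
Proof.
move=> k j e; apply/eqP; apply/negPn/negP => hkj.
set t := axf a k.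
have hy : forall s, s != t -> (phi a s : nat) = phi (flip a k) s.
  move=> s hs; have [t1 [f1 g1]] := adjP (phi_adj a k).
  have : t1 = t.
    case: (eqVneq t1 t) => // ne.
    by move: (axf_dif a k); rewrite -/t g1 1?eq_sym // distnn.
  by move=> et1; subst t1; apply: g1.
have hz : forall s, s != t -> (phi a s : nat) = phi (flip a j) s.
  move=> s hs; have [t1 [f1 g1]] := adjP (phi_adj a j).
  have : t1 = t.
    case: (eqVneq t1 t) => // ne.
    by move: (axf_dif a j); rewrite -e -/t g1 1?eq_sym // distnn.
  by move=> et1; subst t1; apply: g1.
have := grid_square (phi_adj a k) (phi_adj a j) _ hy hz.
move=> /(_ (phi (flip (flip a k) j))).
have a1 : grid_adj (phi (flip (flip a k) j)) (phi (flip a k)).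
  by rewrite adjC; apply: phi_adj.
have a2 : grid_adj (phi (flip (flip a k) j)) (phi (flip a j)).
  by rewrite flipC adjC; apply: phi_adj.
have yz : phi (flip a k) != phi (flip a j) by rewrite (inj_eq hinj) flip_neq2.
move=> /(_ yz a1 a2) /hinj /eqP; by rewrite (negbTE (flip_neq3 a hkj)).
Qed.

Lemma axf_onto a t : exists k, axf a k = t.
Proof.
have := @inj_card_onto _ _ (axf a) (@axf_inj a) (leqnn _) t.
by case/codomP => k ->; exists k.
Qed.

Definition Est t := [set e in Es | along t e].

Lemma cover_Est t : cover (Est t) = Vs.
Proof.
apply/setP => v; apply/bigcupP/idP.
- by case=> e; rewrite inE => /andP [he _] hv; apply: (subsetP (hsub he)).
- move=> /inVs [a ->]; have [k hk] := axf_onto a t.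
  exists [set phi a; phi (flip a k)]; last by rewrite !inE eqxx.
  by rewrite inE phi_edge along_phi hk eqxx.
Qed.

Lemma triv_Est t : trivIset (Est t).
Proof.
apply/trivIsetP => A B; rewrite !inE => /andP [hA tA] /andP [hB tB] hAB.
apply/pred0P => v /=; apply/negP => /andP [vA vB].
have [a ea] := inVs (subsetP (hsub hA) _ vA); subst v.
have [k ek] := edge_struct hA vA; have [j ej] := edge_struct hB vB.
subst A B; move: tA tB; rewrite !along_phi => /eqP tk /eqP tj.
have ekj : k = j by apply: (@axf_inj a); rewrite -tk -tj.
by subst j; rewrite eqxx in hAB.
Qed.

Lemma big_Est t (F : V -> nat) :
  \sum_(v in Vs) F v = \sum_(e in Est t) \sum_(v in e) F v.
Proof. by rewrite -(cover_Est t) big_trivIset //; apply: triv_Est. Qed.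

Lemma Est_struct t e : e \in Est t ->
  exists x : V, (x t).+1 < n t /\ e = [set x; succ x t].
Proof.
rewrite inE => /andP [he ht]; exact: (E_struct (subsetP hEs _ he) ht).
Qed.

Lemma card_Vs : #|Vs| = #|Q|.
Proof. by rewrite -himg card_imset // cardsT. Qed.

Lemma card_Est t : 2 * #|Est t| = #|Q|.
Proof.
rewrite -card_Vs -[#|Vs|]sum1_card (big_Est t (fun _ => 1)) -sum1_card big_distrr /=.
apply: eq_bigr => e /Est_struct [x [hx ->]].
by rewrite sum_set2 ?muln1 //; apply: succ_neq.
Qed.

Lemma sum_Es (G : {set V} -> nat) :
  \sum_(e in Es) G e = \sum_(t < d) \sum_(e in Est t) G e.
Proof.
have -> : \sum_(t < d) \sum_(e in Est t) G e =
          \sum_(t < d) \sum_(e in Es) (if along t e then G e else 0).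
  apply: eq_bigr => t _; rewrite big_mkcond [RHS]big_mkcond /=.
  by apply: eq_bigr => e _; rewrite inE; case: (e \in Es).
rewrite exchange_big /=; apply: eq_bigr => e he.
have [x [y [hxy ee]]] := inE_E (subsetP hEs _ he).
have [s [hs _]] := adjP hxy.
rewrite (bigD1 s) //= big1 ?addn0.
  by rewrite ee (along_set2 _ hxy hs) eqxx.
by move=> t hts; rewrite ee (along_set2 _ hxy hs) (negbTE hts).
Qed.

End Copy.

Definition PR (R : nat -> nat) (k : nat) := \prod_(j < k) R j.

Lemma PR_gt0 R k : (forall i, i < k -> 0 < R i) -> 0 < PR R k.
Proof.
move=> h; rewrite /PR prodn_gt0 // => i; exact: h.
Qed.

Lemma encN_lt (R Z : nat -> nat) k : (forall i, i < k -> Z i < R i) ->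
  \sum_(i < k) Z i * PR R i < PR R k.
Proof.
elim: k => [|k IH] h; first by rewrite big_ord0 /PR big_ord0.
rewrite big_ord_recr /= /PR big_ord_recr /= -/(PR R k).
have h1 := IH (fun i hi => h i (ltnW hi)).
have h2 := h k (ltnSn k).
set S := \sum_(i < k) _ in h1 *; set P := PR R k in h1 *.
nia.
Qed.

Lemma encN_inj (R Z Z' : nat -> nat) k :
  (forall i, i < k -> Z i < R i) -> (forall i, i < k -> Z' i < R i) ->
  \sum_(i < k) Z i * PR R i = \sum_(i < k) Z' i * PR R i ->
  forall i, i < k -> Z i = Z' i.
Proof.
elim: k => [|k IH] h h' E i hi; first by [].
move: E; rewrite !big_ord_recr /=.
have l1 := encN_lt (fun i hi => h i (ltnW hi)).
have l2 := encN_lt (fun i hi => h' i (ltnW hi)).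
have hP : 0 < PR R k.
  apply: PR_gt0 => j hj; have := h j (ltnW hj); lia.
set S := \sum_(i < k) Z i * _ in l1 *; set S' := \sum_(i < k) Z' i * _ in l2 *.
set P := PR R k in l1 l2 hP *.
move=> E.
have ez : Z k = Z' k.
  have := congr1 (fun m => m %/ P) E.
  by rewrite (addnC S) (addnC S') !divnMDl // !divn_small // !addn0.
have es : S = S' by rewrite ez in E; lia.
case: (ltngtP i k) => [lt|gt|->] //; last by move: hi; lia.
apply: (IH (fun i hi => h i (ltnW hi)) (fun i hi => h' i (ltnW hi)) es i lt).
Qed.

Section Enc.
Variables (d : nat) (i0 : 'I_d).

Definition ext (r : 'I_d -> nat) (j : nat) : nat := r (insubd i0 j).

Lemma ext_val r (i : 'I_d) : ext r i = r i.
Proof. by rewrite /ext valKd. Qed.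

Definition wt (r : 'I_d -> nat) (i : 'I_d) : nat := PR (ext r) i.
Definition enc (r : 'I_d -> nat) (z : 'I_d -> nat) : nat := \sum_(i < d) z i * wt r i.

Lemma encE r z : enc r z = \sum_(i < d) ext z i * PR (ext r) i.
Proof. by apply: eq_bigr => i _; rewrite ext_val. Qed.

Lemma prodE r : \prod_(i < d) r i = PR (ext r) d.
Proof. by apply: eq_bigr => i _; rewrite ext_val. Qed.

Lemma enc_lt r z : (forall i, z i < r i) -> enc r z < \prod_(i < d) r i.
Proof.
move=> h; rewrite encE prodE; apply: encN_lt => i hi.
by rewrite /ext; apply: h.
Qed.

Lemma enc_inj r z z' : (forall i, z i < r i) -> (forall i, z' i < r i) ->
  enc r z = enc r z' -> forall i, z i = z' i.
Proof.
move=> h h'; rewrite !encE => E i.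
have := encN_inj (fun j _ => h (insubd i0 j)) (fun j _ => h' (insubd i0 j)) E (ltn_ord i).
by rewrite valKd.
Qed.

End Enc.

Definition refl (m k : nat) (b : bool) := if b then m.-1 - k else k.

Lemma refl_lt m k b : k < m -> refl m k b < m.
Proof. rewrite /refl; case: b; lia. Qed.

Lemma refl_inj m k k' b : k < m -> k' < m -> refl m k b = refl m k' b -> k = k'.
Proof. rewrite /refl; case: b; lia. Qed.

Lemma refl_pair m k b : k < m -> refl m k b + refl m k (~~ b) = m.-1.
Proof. rewrite /refl; case: b => /=; lia. Qed.

Lemma refl_pairS m k b : k.+1 < m -> odd (refl m k b) != odd (refl m k.+1 b).
Proof.
rewrite /refl; case: b => h; last by rewrite oddS; case: (odd k).
have -> : m.-1 - k = (m.-1 - k.+1).+1 by lia.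
by rewrite oddS; case: (odd _).
Qed.

Section Refl.
Variable d : nat.
Implicit Types (r v : 'I_d -> nat) (al be : 'I_d).

Definition ya r al be v := refl (r al) (v al) (odd (v be)).
Definition yd r al be v (i : 'I_d) :=
  if i == al then ya r al be v else refl (r i) (v i) (odd (ya r al be v)).

Lemma yd_lt r al be v : (forall i, v i < r i) -> forall i, yd r al be v i < r i.
Proof.
move=> h i; rewrite /yd; case: ifP => [/eqP ->|_]; apply: refl_lt; exact: h.
Qed.

Lemma yd_inj r al be v v' : al != be ->
  (forall i, v i < r i) -> (forall i, v' i < r i) ->
  (forall i, yd r al be v i = yd r al be v' i) -> forall i, v i = v' i.
Proof.
move=> hab h h' E.
have ea : ya r al be v = ya r al be v' by have := E al; rewrite /yd eqxx.
have oth : forall i, i != al -> v i = v' i.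
  move=> i hi; have := E i; rewrite /yd (negbTE hi) ea.
  by apply: refl_inj; [apply: h | apply: h'].
move=> i; case: (eqVneq i al) => [->|]; last exact: oth.
move: ea; rewrite /ya (oth be); last by rewrite eq_sym.
by apply: refl_inj; [apply: h | apply: h'].
Qed.

(* pairing along be: changes control of al *)
Lemma yd_pair_be r al be v v' : al != be ->
  (forall s, s != be -> v' s = v s) -> v' be = (v be).+1 -> v al < r al ->
  yd r al be v al + yd r al be v' al = (r al).-1.
Proof.
move=> hab hs hb hal; rewrite /yd eqxx /ya hb (hs al hab) oddS.
exact: refl_pair.
Qed.

(* pairing along al: changes the parity of ya *)
Lemma yd_pair_al r al be v v' i : al != be -> i != al ->
  (forall s, s != al -> v' s = v s) -> v' al = (v al).+1 -> (v al).+1 < r al ->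
  v i < r i ->
  yd r al be v i + yd r al be v' i = (r i).-1.
Proof.
move=> hab hia hs ha hal hi.
rewrite /yd (negbTE hia) (hs i hia).
have -> : odd (ya r al be v') = ~~ odd (ya r al be v).
  rewrite /ya ha (hs be); last by rewrite eq_sym.
  have := refl_pairS (odd (v be)) hal.
  by case: (odd (refl _ _ _)); case: (odd (refl _ _ _)).
exact: refl_pair.
Qed.

End Refl.

Lemma card_grid d (n : 'I_d -> nat) : #|grid_V n| = \prod_(i < d) n i.
Proof.
rewrite /grid_V card_dep_ffun foldrE big_map big_enum /=.
by apply: eq_bigr => i _; rewrite card_ord.
Qed.

Definition cv d (n : 'I_d -> nat) (x : grid_V n) : 'I_d -> nat := fun i => x i.

Lemma cv_lt d (n : 'I_d -> nat) (x : grid_V n) i : cv x i < n i.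
Proof. exact: ltn_ord. Qed.

Section VSum.
Variables (d : nat) (n : 'I_d -> nat).
Local Notation V := (grid_V n).
Local Notation Q := (Q_V d).
Variables (Vs : {set V}) (Es : {set {set V}}) (phi : Q -> V).
Hypotheses (hEs : Es \subset grid_E n)
  (hsub : forall e, e \in Es -> e \subset Vs)
  (hinj : injective phi) (himg : phi @: [set: Q] = Vs)
  (hiff : forall a b : Q, ([set phi a; phi b] \in Es) = ([set a; b] \in Q_E d)).

Lemma card_Est2 t : #|Est Es t| = #|Q| %/ 2.
Proof. by rewrite -(card_Est hEs hsub hinj himg hiff t) mulKn. Qed.

Lemma succ_cv (x : V) s j : (x s).+1 < n s ->
  cv (succ x s) j = if j == s then (cv x j).+1 else cv x j.
Proof. by move=> h; rewrite /cv succE. Qed.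

Lemma sum_yd_s al be (hab : al != be) i s :
  s = (if i == al then be else al) ->
  \sum_(v in Vs) yd n al be (cv v) i = (n i).-1 * (#|Q| %/ 2).
Proof.
move=> es.
rewrite (big_Est hEs hsub hinj himg hiff s).
transitivity (\sum_(e in Est Es s) (n i).-1); last first.
  by rewrite sum_nat_const card_Est2 mulnC.
apply: eq_bigr => e /(Est_struct hEs) [x [hx ->]].
rewrite sum_set2; last exact: succ_neq.
have hs : forall j, j != s -> cv (succ x s) j = cv x j.
  by move=> j hj; rewrite succ_cv // (negbTE hj).
have h1 : cv (succ x s) s = (cv x s).+1 by rewrite succ_cv // eqxx.
case: (eqVneq i al) es => [-> es|hia es]; subst s.
- by apply: yd_pair_be => //; apply: cv_lt.
- by apply: yd_pair_al => //; apply: cv_lt.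
Qed.

Lemma sum_yd al be (hab : al != be) i :
  \sum_(v in Vs) yd n al be (cv v) i = (n i).-1 * (#|Q| %/ 2).
Proof. exact: (sum_yd_s hab erefl). Qed.

Lemma sum_enc_yd i0 al be (hab : al != be) (w : 'I_d -> nat) :
  \sum_(v in Vs) enc i0 w (yd n al be (cv v)) =
  \sum_(i < d) (n i).-1 * (#|Q| %/ 2) * wt i0 w i.
Proof.
rewrite /enc exchange_big /=; apply: eq_bigr => i _.
by rewrite -big_distrl /= sum_yd.
Qed.

End VSum.

Lemma vertex_magic d (n : 'I_d -> nat) (i0 al be : 'I_d) : al != be ->
  magic_vertex_labeling (grid_E n) (Q_E d)
    (fun v => 1 + enc i0 n (yd n al be (cv v))).
Proof.
move=> hab; split.
- move=> x y /eqP; rewrite eqn_add2l => /eqP E.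
  have := enc_inj (yd_lt al be (@cv_lt _ _ x)) (yd_lt al be (@cv_lt _ _ y)) E.
  move=> /(yd_inj hab (@cv_lt _ _ x) (@cv_lt _ _ y)) H.
  exact: ffun_nat_eq.
- move=> v; rewrite cardsT card_grid /=.
  rewrite add1n; exact: enc_lt (yd_lt al be (@cv_lt _ _ v)).
- exists (#|Q_V d| + \sum_(i < d) (n i).-1 * (#|Q_V d| %/ 2) * wt i0 n i).
  move=> Vs Es [hEs hsub [phi [hinj himg hiff]]].
  rewrite big_split /= sum1_card (card_Vs hinj himg).
  by rewrite (sum_enc_yd hEs hsub hinj himg hiff).
Qed.

Lemma sum_le_sub (d : nat) (P P' : pred 'I_d) (F : 'I_d -> nat) :
  (forall i, P i -> P' i) -> \sum_(i | P i) F i <= \sum_(i | P' i) F i.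
Proof. by move=> h; apply: (sub_le_big leqnn (fun x y => leq_addr y x)). Qed.

Section Edges.
Variables (d : nat) (n : 'I_d -> nat) (i0 : 'I_d) (al be : 'I_d -> 'I_d).
Hypotheses (hal : forall t, al t != t) (hbe : forall t, be t != t)
  (hab : forall t, al t != be t) (hn : forall i, 0 < n i).
Local Notation V := (grid_V n).
Local Notation Q := (Q_V d).

Definition rt (t : 'I_d) (i : 'I_d) : nat := if i == t then (n i).-1 else n i.
Definition Mt (t : 'I_d) := \prod_(i < d) rt t i.
Definition off (t : 'I_d) := \sum_(s < d | s < t) Mt s.
Definition lab (t : 'I_d) (x : V) := 1 + off t + enc i0 (rt t) (yd (rt t) (al t) (be t) (cv x)).
Definition Ft (t : 'I_d) (v : V) := enc i0 (rt t) (yd n (al t) (be t) (cv v)).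

Definition gE (e : {set V}) : nat :=
  match [pick p : 'I_d * V | ((p.2 p.1).+1 < n p.1) && (e == [set p.2; succ p.2 p.1])] with
  | Some p => lab p.1 p.2
  | None => 0
  end.

Lemma gE_set (t : 'I_d) (x : V) : (x t).+1 < n t -> gE [set x; succ x t] = lab t x.
Proof.
move=> h; rewrite /gE; case: pickP => [[t' x'] /andP [/= h' /eqP E]|H].
  by have [-> ->] := succ_set_inj h h' E.
by have := H (t, x); rewrite /= h eqxx.
Qed.

Lemma refl_pair2 m k c : k.+1 < m ->
  refl m k c + refl m k.+1 c = 2 * refl m.-1 k c + 1.
Proof. rewrite /refl; case: c; lia. Qed.

Lemma yd_edge (t : 'I_d) (x : V) (i : 'I_d) : (x t).+1 < n t ->
  yd n (al t) (be t) (cv x) i + yd n (al t) (be t) (cv (succ x t)) i =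
  2 * yd (rt t) (al t) (be t) (cv x) i + (i == t).
Proof.
move=> h.
have cs : forall j, j != t -> cv (succ x t) j = cv x j.
  by move=> j hj; rewrite succ_cv // (negbTE hj).
have ya1 : ya n (al t) (be t) (cv (succ x t)) = ya n (al t) (be t) (cv x).
  by rewrite /ya !cs.
have ya2 : ya (rt t) (al t) (be t) (cv x) = ya n (al t) (be t) (cv x).
  by rewrite /ya /rt (negbTE (hal t)).
rewrite /yd ya1 ya2; case: (eqVneq i (al t)) => [ei|ni].
  subst i; rewrite (negbTE (hal t)) /=; lia.
case: (eqVneq i t) => [ei|nit] /=.
  subst i; rewrite /rt eqxx succ_cv // eqxx; apply: refl_pair2.
  by rewrite /cv; lia.
by rewrite /rt (negbTE nit) cs //; lia.
Qed.

Lemma lab_pair (t : 'I_d) (x : V) : (x t).+1 < n t ->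
  2 * lab t x + wt i0 (rt t) t = 2 * (1 + off t) + (Ft t x + Ft t (succ x t)).
Proof.
move=> h; rewrite /lab /Ft /enc -big_split /=.
have -> : \sum_(i < d) (yd n (al t) (be t) (cv x) i * wt i0 (rt t) i +
                        yd n (al t) (be t) (cv (succ x t)) i * wt i0 (rt t) i) =
          \sum_(i < d) (2 * (yd (rt t) (al t) (be t) (cv x) i * wt i0 (rt t) i) +
                        (i == t) * wt i0 (rt t) i).
  by apply: eq_bigr => i _; rewrite -mulnDl yd_edge // mulnDl mulnA.
rewrite big_split /= -big_distrr /=.
have -> : \sum_(i < d) (i == t) * wt i0 (rt t) i = wt i0 (rt t) t.
  by rewrite (bigD1 t) //= eqxx mul1n big1 ?addn0 // => i /negbTE ->.
lia.
Qed.

Lemma rt_lt (t : 'I_d) (x : V) : (x t).+1 < n t -> forall i, cv x i < rt t i.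
Proof.
move=> h i; rewrite /rt /cv; case: ifP => [/eqP ->|_]; last exact: ltn_ord.
lia.
Qed.

Lemma off_Mt (t : 'I_d) : off t + Mt t = \sum_(s < d | s < t.+1) Mt s.
Proof.
rewrite [RHS](bigD1 t) //= addnC; congr (_ + _).
by apply: eq_bigl => s; rewrite ltnS ltn_neqAle andbC.
Qed.

Lemma off_le (t t' : 'I_d) : t < t' -> off t + Mt t <= off t'.
Proof. by move=> h; rewrite off_Mt; apply: sum_le_sub => s; lia. Qed.

Lemma off_tot (t : 'I_d) : off t + Mt t <= \sum_(s < d) Mt s.
Proof. by rewrite off_Mt; apply: sum_le_sub. Qed.

Lemma lab_inj (t t' : 'I_d) (x x' : V) : (x t).+1 < n t -> (x' t').+1 < n t' ->
  lab t x = lab t' x' -> t = t' /\ x = x'.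
Proof.
move=> h h' E.
have l1 := enc_lt i0 (yd_lt (al t) (be t) (rt_lt h)).
have l2 := enc_lt i0 (yd_lt (al t') (be t') (rt_lt h')).
move: E l1 l2; rewrite /lab -/(Mt t) -/(Mt t').
set a := enc _ _ _; set b := enc _ _ _ => E l1 l2.
have ett : t = t'.
  case: (ltngtP t t') => [lt|lt|/val_inj //].
    by have := off_le lt; lia.
  by have := off_le lt; lia.
subst t'; split => //.
have eab : a = b by lia.
have := enc_inj (yd_lt (al t) (be t) (rt_lt h)) (yd_lt (al t) (be t) (rt_lt h')) eab.
move=> /(yd_inj (hab t) (rt_lt h) (rt_lt h')); exact: ffun_nat_eq.
Qed.

Lemma lab_le (t : 'I_d) (x : V) : (x t).+1 < n t -> 1 <= lab t x <= \sum_(s < d) Mt s.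
Proof.
move=> h; have l1 := enc_lt i0 (yd_lt (al t) (be t) (rt_lt h)).
move: l1 (off_tot t); rewrite /lab -/(Mt t); lia.
Qed.

End Edges.

Lemma E_struct2 d (n : 'I_d -> nat) e : e \in grid_E n ->
  exists t (x : grid_V n), (x t).+1 < n t /\ e = [set x; succ x t].
Proof.
move=> he; have [x [y [hxy ee]]] := inE_E he.
have [s [hs _]] := adjP hxy.
have al : along s e by rewrite ee (along_set2 _ hxy hs) eqxx.
by have [z hz] := E_struct he al; exists s, z.
Qed.

Section Card.
Variables (d : nat) (n : 'I_d -> nat).
Hypothesis (hn : forall i, 0 < n i).
Local Notation V := (grid_V n).

Lemma rt_leq (t i : 'I_d) : rt n t i <= n i.
Proof. by rewrite /rt; case: ifP => // _; rewrite leq_pred. Qed.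

Definition iota_t (t : 'I_d) (p : grid_V (rt n t)) : V :=
  [ffun i => widen_ord (rt_leq t i) (p i)].

Lemma iota_val (t : 'I_d) (p : grid_V (rt n t)) (i : 'I_d) : (iota_t p i : nat) = p i.
Proof. by rewrite /iota_t ffunE. Qed.

Lemma iota_ok (t : 'I_d) (p : grid_V (rt n t)) : ((iota_t p) t).+1 < n t.
Proof.
rewrite iota_val; have := ltn_ord (p t); have := hn t.
have ht : rt n t t = (n t).-1 by rewrite /rt eqxx.
set m := nat_of_ord (p t); lia.
Qed.

Definition hmap (u : {t : 'I_d & grid_V (rt n t)}) : {set V} :=
  [set iota_t (tagged u); succ (iota_t (tagged u)) (tag u)].

Lemma hmap_inj : injective hmap.
Proof.
move=> [t p] [t' p']; rewrite /hmap /= => E.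
have [ett eio] := succ_set_inj (iota_ok p) (iota_ok p') E.
subst t'; congr existT; apply: ffun_nat_eq => i.
by have := congr1 (fun f : V => (f i : nat)) eio; rewrite !iota_val.
Qed.

Lemma card_E_ge : \sum_(t < d) Mt n t <= #|grid_E n|.
Proof.
have -> : \sum_(t < d) Mt n t = #|{: {t : 'I_d & grid_V (rt n t)}}|.
  rewrite card_tagged sumnE big_map big_enum /=.
  by apply: eq_bigr => t _; rewrite card_grid.
rewrite -(card_imset _ hmap_inj); apply: subset_leq_card.
apply/subsetP => e /imsetP [u _ ->]; rewrite /hmap; apply: succ_inE.
exact: iota_ok.
Qed.

End Card.

Section EdgeSum.
Variables (d : nat) (n : 'I_d -> nat) (i0 : 'I_d) (al be : 'I_d -> 'I_d).
Hypotheses (hal : forall t, al t != t) (hbe : forall t, be t != t)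
  (hab : forall t, al t != be t) (hn : forall i, 0 < n i).
Local Notation V := (grid_V n).
Local Notation Q := (Q_V d).
Variables (Vs : {set V}) (Es : {set {set V}}) (phi : Q -> V).
Hypotheses (hEs : Es \subset grid_E n)
  (hsub : forall e, e \in Es -> e \subset Vs)
  (hinj : injective phi) (himg : phi @: [set: Q] = Vs)
  (hiff : forall a b : Q, ([set phi a; phi b] \in Es) = ([set a; b] \in Q_E d)).

Local Notation h := (#|Q| %/ 2).
Local Notation g := (gE i0 al be).

Lemma sum_gE_Est (t : 'I_d) :
  2 * \sum_(e in Est Es t) g e + h * wt i0 (rt n t) t =
  h * (2 * (1 + off n t)) + \sum_(i < d) (n i).-1 * h * wt i0 (rt n t) i.
Proof.
have E1 : \sum_(e in Est Es t) (2 * g e + wt i0 (rt n t) t) =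
          \sum_(e in Est Es t) (2 * (1 + off n t) + \sum_(v in e) Ft i0 al be t v).
  apply: eq_bigr => e /(Est_struct hEs) [x [hx ->]].
  rewrite gE_set // sum_set2; last exact: succ_neq.
  exact: lab_pair.
move: E1; rewrite !big_split /= -big_distrr /= !sum_nat_const.
rewrite (card_Est2 hEs hsub hinj himg hiff) -(big_Est hEs hsub hinj himg hiff).
rewrite /Ft (sum_enc_yd hEs hsub hinj himg hiff) //.
move=> E1; rewrite mulnCA mul2n -addnn; move: E1; rewrite muln0 addn0; exact.
Qed.

End EdgeSum.

Lemma edge_magic_gen d (n : 'I_d -> nat) (i0 : 'I_d) (al be : 'I_d -> 'I_d) :
  (forall t, al t != t) -> (forall t, be t != t) -> (forall t, al t != be t) ->
  (forall i, 0 < n i) ->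
  magic_edge_labeling (grid_E n) (Q_E d) (gE i0 al be).
Proof.
move=> hal hbe hab hn; split.
- move=> e e' he he' E.
  have [t [x [hx ee]]] := E_struct2 he; have [t' [x' [hx' ee']]] := E_struct2 he'.
  subst e e'; move: E; rewrite !gE_set // => /(lab_inj hab hx hx') [et ex].
  by subst t' x'.
- move=> e he; have [t [x [hx ->]]] := E_struct2 he.
  rewrite gE_set //; have := lab_le i0 al be hx; have := card_E_ge hn; lia.
- pose K t := #|Q_V d| %/ 2 * (2 * (1 + off n t)) +
     \sum_(i < d) (n i).-1 * (#|Q_V d| %/ 2) * wt i0 (rt n t) i -
     #|Q_V d| %/ 2 * wt i0 (rt n t) t.
  exists ((\sum_(t < d) K t) %/ 2).
  move=> Vs Es [hEs hsub [phi [hinj himg hiff]]].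
  rewrite (sum_Es hEs).
  have -> : \sum_(t < d) K t = 2 * \sum_(t < d) \sum_(e in Est Es t) gE i0 al be e.
    rewrite big_distrr /=; apply: eq_bigr => t _; rewrite /K.
    have := sum_gE_Est i0 hal hbe hab hEs hsub hinj himg hiff t => E; by rewrite -E addnK.
  by rewrite mulKn.
Qed.

Section D2.
Variable (n : 'I_2 -> nat).
Hypothesis (hn : forall i, 2 <= n i).
Local Notation V := (grid_V n).
Local Notation Q := (Q_V 2).
Local Notation o0 := (ord0 : 'I_2).
Local Notation o1 := (ord_max : 'I_2).
Local Notation n0 := (n o0).
Local Notation n1 := (n o1).

Lemma I2_cases (i : 'I_2) : i = o0 \/ i = o1.
Proof. by case: i => [[|[|m]] hm]; [left; apply: val_inj | right; apply: val_inj | ]. Qed.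

Definition lab2 (t : 'I_2) (x : V) : nat :=
  if t == o0 then 1 + (2 * n0 - 1) * cv x o1 + (n0 - 2 - cv x o0)
  else 1 + (2 * n0 - 1) * (n1 - 2 - cv x o1) + (n0 - 1) + cv x o0.

Definition g2 (e : {set V}) : nat :=
  match [pick p : 'I_2 * V | ((p.2 p.1).+1 < n p.1) && (e == [set p.2; succ p.2 p.1])] with
  | Some p => lab2 p.1 p.2
  | None => 0
  end.

Lemma g2_set (t : 'I_2) (x : V) : (x t).+1 < n t -> g2 [set x; succ x t] = lab2 t x.
Proof.
move=> h; rewrite /g2; case: pickP => [[t' x'] /andP [/= h' /eqP E]|H].
  by have [-> ->] := succ_set_inj h h' E.
by have := H (t, x); rewrite /= h eqxx.
Qed.

Lemma qr_uniq (N q q' r r' : nat) : N * q + r = N * q' + r' -> r < N -> r' < N ->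
  q = q' /\ r = r'.
Proof.
move=> E hr hr'.
have hN : 0 < N by lia.
have eq : q = q'.
  have := congr1 (fun m => m %/ N) E.
  by rewrite ![N * _]mulnC !divnMDl // !divn_small // !addn0.
by subst q'; split => //; lia.
Qed.

Lemma ffun2 (x y : V) : cv x o0 = cv y o0 -> cv x o1 = cv y o1 -> x = y.
Proof. by move=> h0 h1; apply: ffun_nat_eq => i; case: (I2_cases i) => ->. Qed.

Lemma lab2_inj (t t' : 'I_2) (x x' : V) : (cv x t).+1 < n t -> (cv x' t').+1 < n t' ->
  lab2 t x = lab2 t' x' -> t = t' /\ x = x'.
Proof.
have hx0 := cv_lt x o0; have hx1 := cv_lt x o1.
have hy0 := cv_lt x' o0; have hy1 := cv_lt x' o1.
have hn0 := hn o0; have hn1 := hn o1.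
case: (I2_cases t) => ->; case: (I2_cases t') => -> h h'; rewrite /lab2 /= => E.
- have E' : (2 * n0 - 1) * cv x o1 + (n0 - 2 - cv x o0) =
            (2 * n0 - 1) * cv x' o1 + (n0 - 2 - cv x' o0) by lia.
  have [q1 q2] := qr_uniq E' ltac:(lia) ltac:(lia).
  by split => //; apply: ffun2; lia.
- have E' : (2 * n0 - 1) * cv x o1 + (n0 - 2 - cv x o0) =
            (2 * n0 - 1) * (n1 - 2 - cv x' o1) + (n0 - 1 + cv x' o0) by lia.
  have [q1 q2] := qr_uniq E' ltac:(lia) ltac:(lia).
  lia.
- have E' : (2 * n0 - 1) * (n1 - 2 - cv x o1) + (n0 - 1 + cv x o0) =
            (2 * n0 - 1) * cv x' o1 + (n0 - 2 - cv x' o0) by lia.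
  have [q1 q2] := qr_uniq E' ltac:(lia) ltac:(lia).
  lia.
- have E' : (2 * n0 - 1) * (n1 - 2 - cv x o1) + (n0 - 1 + cv x o0) =
            (2 * n0 - 1) * (n1 - 2 - cv x' o1) + (n0 - 1 + cv x' o0) by lia.
  have [q1 q2] := qr_uniq E' ltac:(lia) ltac:(lia).
  by split => //; apply: ffun2; lia.
Qed.


Lemma sumMt2 : \sum_(t < 2) Mt n t = n0.-1 * n1 + n0 * n1.-1.
Proof.
rewrite /Mt !big_ord_recr !big_ord0 /= /rt /=.
have -> : widen_ord (leqnSn 1) ord_max = o0 by apply: val_inj.
by rewrite add0n !mul1n.
Qed.

Lemma lab2_le (t : 'I_2) (x : V) : (cv x t).+1 < n t ->
  1 <= lab2 t x <= n0.-1 * n1 + n0 * n1.-1.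
Proof.
have hx0 := cv_lt x o0; have hx1 := cv_lt x o1.
have hn0 := hn o0; have hn1 := hn o1.
case: (I2_cases t) => -> h; rewrite /lab2 /=.
- have : (2 * n0 - 1) * cv x o1 <= (2 * n0 - 1) * n1.-1 by apply: leq_mul; lia.
  nia.
- have : (2 * n0 - 1) * (n1 - 2 - cv x o1) <= (2 * n0 - 1) * (n1 - 2) by apply: leq_mul; lia.
  nia.
Qed.

Lemma lab2_pair0 (x : V) : (cv x o0).+1 < n0 ->
  2 * lab2 o0 x + (cv x o0 + cv (succ x o0) o0) =
  (2 * n0 - 1) * cv x o1 + (2 * n0 - 1) * cv (succ x o0) o1 + (2 * n0 - 1).
Proof.
move=> h; rewrite !succ_cv // /= /lab2 /=; have := hn o0; nia.
Qed.

Lemma lab2_pair1 (x : V) : (cv x o1).+1 < n1 ->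
  2 * lab2 o1 x + ((2 * n0 - 1) * cv x o1 + (2 * n0 - 1) * cv (succ x o1) o1) =
  cv x o0 + cv (succ x o1) o0 + (2 * n0 + (2 * n0 - 1) * (2 * n1 - 3)).
Proof.
move=> h; rewrite !succ_cv // /= /lab2 /=; have := hn o0; have := hn o1; nia.
Qed.

End D2.

Section D2sum.
Variable (n : 'I_2 -> nat).
Hypothesis (hn : forall i, 2 <= n i).
Local Notation V := (grid_V n).
Local Notation Q := (Q_V 2).
Local Notation o0 := (ord0 : 'I_2).
Local Notation o1 := (ord_max : 'I_2).
Local Notation n0 := (n o0).
Local Notation n1 := (n o1).
Variables (Vs : {set V}) (Es : {set {set V}}) (phi : Q -> V).
Hypotheses (hEs : Es \subset grid_E n)
  (hsub : forall e, e \in Es -> e \subset Vs)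
  (hinj : injective phi) (himg : phi @: [set: Q] = Vs)
  (hiff : forall a b : Q, ([set phi a; phi b] \in Es) = ([set a; b] \in Q_E 2)).
Local Notation h := (#|Q| %/ 2).

Lemma sumA :
  2 * \sum_(e in Est Es o0) g2 e + \sum_(v in Vs) cv v o0 =
  \sum_(v in Vs) (2 * n0 - 1) * cv v o1 + h * (2 * n0 - 1).
Proof.
have E1 : \sum_(e in Est Es o0) (2 * g2 e + \sum_(v in e) cv v o0) =
          \sum_(e in Est Es o0) (\sum_(v in e) (2 * n0 - 1) * cv v o1 + (2 * n0 - 1)).
  apply: eq_bigr => e /(Est_struct hEs) [x [hx ->]].
  rewrite g2_set // !sum_set2; last 2 first; try exact: succ_neq.
  rewrite lab2_pair0 //.
rewrite big_split [in RHS]big_split sum_nat_const (card_Est2 hEs hsub hinj himg hiff) in E1.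
rewrite -!(big_Est hEs hsub hinj himg hiff) in E1.
by rewrite big_distrr.
Qed.

Lemma sumB :
  2 * \sum_(e in Est Es o1) g2 e + \sum_(v in Vs) (2 * n0 - 1) * cv v o1 =
  \sum_(v in Vs) cv v o0 + h * (2 * n0 + (2 * n0 - 1) * (2 * n1 - 3)).
Proof.
have E1 : \sum_(e in Est Es o1) (2 * g2 e + \sum_(v in e) (2 * n0 - 1) * cv v o1) =
          \sum_(e in Est Es o1) (\sum_(v in e) cv v o0 +
                                 (2 * n0 + (2 * n0 - 1) * (2 * n1 - 3))).
  apply: eq_bigr => e /(Est_struct hEs) [x [hx ->]].
  rewrite g2_set // !sum_set2; last 2 first; try exact: succ_neq.
  rewrite lab2_pair1 //.
rewrite big_split [in RHS]big_split sum_nat_const (card_Est2 hEs hsub hinj himg hiff) in E1.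
rewrite -!(big_Est hEs hsub hinj himg hiff) in E1.
by rewrite big_distrr.
Qed.

End D2sum.

Lemma edge_magic_2 (n : 'I_2 -> nat) : (forall i, 2 <= n i) ->
  magic_edge_labeling (grid_E n) (Q_E 2) (@g2 n).
Proof.
move=> hn; split.
- move=> e e' he he' E.
  have [t [x [hx ee]]] := E_struct2 he; have [t' [x' [hx' ee']]] := E_struct2 he'.
  subst e e'; move: E; rewrite !g2_set // => /(lab2_inj hn hx hx') [et ex].
  by subst t' x'.
- move=> e he; have [t [x [hx ->]]] := E_struct2 he.
  rewrite g2_set //; have := lab2_le hn hx.
  have := card_E_ge (fun i => leq_trans (isT : 0 < 2) (hn i)); rewrite sumMt2; lia.
- exists ((#|Q_V 2| %/ 2 * (2 * n ord0 - 1) +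
          #|Q_V 2| %/ 2 * (2 * n ord0 + (2 * n ord0 - 1) * (2 * n ord_max - 3))) %/ 2).
  move=> Vs Es [hEs hsub [phi [hinj himg hiff]]].
  rewrite (sum_Es hEs) !big_ord_recr big_ord0 /= add0n.
  have hA := sumA hn hEs hsub hinj himg hiff.
  have hB := sumB hn hEs hsub hinj himg hiff.
  have -> : widen_ord (leqnSn 1) ord_max = ord0 :> 'I_2 by apply: val_inj.
  set A := \sum_(e in Est Es ord0) _ in hA *.
  set B := \sum_(e in Est Es ord_max) _ in hB *.
  have -> : #|Q_V 2| %/ 2 * (2 * n ord0 - 1) +
     #|Q_V 2| %/ 2 * (2 * n ord0 + (2 * n ord0 - 1) * (2 * n ord_max - 3)) =
     2 * (A + B) by lia.
  by rewrite mulKn.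
Qed.

Theorem theorem1 (d : nat) (n : 'I_d -> nat)
  (hd : 2 <= d)
  (hmono : forall i j : 'I_d, (i <= j)%N -> n j <= n i)
  (h2 : forall i : 'I_d, 2 <= n i) :
  (exists f : grid_V n -> nat, magic_vertex_labeling (grid_E n) (Q_E d) f) /\
  (exists g : {set grid_V n} -> nat, magic_edge_labeling (grid_E n) (Q_E d) g).
Proof.
case: d n hmono h2 hd => [|[|[|k]]] n hmono h2 hd //.
- split.
  + exists (fun v => 1 + enc ord0 n (yd n ord0 ord_max (cv v))).
    exact: vertex_magic.
  + by exists (@g2 n); apply: edge_magic_2.
- have hn : forall i, 0 < n i by move=> i; have := h2 i; lia.
  split.
  + exists (fun v => 1 + enc ord0 n (yd n ord0 (inord 1) (cv v))).
    apply: vertex_magic; by rewrite -val_eqE /= inordK.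
  + pose al (t : 'I_k.+3) : 'I_k.+3 := inord (if t.+1 < k.+3 then t.+1 else 0).
    pose be (t : 'I_k.+3) : 'I_k.+3 := inord (if t.+2 < k.+3 then t.+2 else t.+2 - k.+3).
    have vA : forall t, (al t : nat) = if t.+1 < k.+3 then t.+1 else 0.
      move=> t; rewrite /al inordK //; have := ltn_ord t; case: ifP => ?; lia.
    have vB : forall t, (be t : nat) = if t.+2 < k.+3 then t.+2 else t.+2 - k.+3.
      move=> t; rewrite /be inordK //; have := ltn_ord t; case: ifP => ?; lia.
    have hal : forall t, al t != t.
      move=> t; have := ltn_ord t; rewrite -val_eqE /= vA; case: ifP => ?; lia.
    have hbe : forall t, be t != t.
      move=> t; have := ltn_ord t; rewrite -val_eqE /= vB; case: ifP => ?; lia.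
    have hab : forall t, al t != be t.
      move=> t; have := ltn_ord t; rewrite -val_eqE /= vA vB.
      case: ifP => ?; case: ifP => ?; lia.
    exists (gE ord0 al be); exact: edge_magic_gen.
Qed.
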